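(* Let $K$ be a compact Hausdorff space and let $p\in K$ be a non-$P$-point of $K$, i.e. there exists $g\in C(K)$ which is not constant on any open neighbourhood of $p$. Then the Banach space $C(K,p)=\{f\in C(K): f(p)=0\}$ (with the sup norm) fails the ball fixed point property.
   Context: $C(K)$ is the real Banach space of continuous functions on $K$ with the sup norm. A real Banach space $X$ has the ball fixed point property (BFPP) if every nonexpansive map $T\colon B_X\to B_X$ (i.e. $\|Tx-Ty\|\le\|x-y\|$) has a fixed point, where $B_X$ is the closed unit ball. *)

(* Defs.v *)
From HB Require Import structures.
From mathcomp Require Import all_boot all_order all_algebra.
From mathcomp Require Import all_classical all_reals all_analysis.
Set Implicit Arguments. Unset Strict Implicit. Unset Printing Implicit Defensive.
Import Order.TTheory GRing.Theory Num.Theory.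
Import numFieldNormedType.Exports.
Local Open Scope classical_set_scope.
Local Open Scope ring_scope.

(* Sup norm of a real function on K (for continuous f on compact K this is the
   usual norm of C(K)). *)
Definition supnorm (R : realType) (K : Type) (f : K -> R) : R :=
  sup (range (fun x => `|f x|)).

Definition CKp (R : realType) (K : topologicalType) (p : K) : set (K -> R) :=
  [set f | continuous f /\ f p = 0].

Definition ball_CKp (R : realType) (K : topologicalType) (p : K) : set (K -> R) :=
  [set f | @CKp R K p f /\ supnorm f <= 1].

Definition non_P_point (R : realType) (K : topologicalType) (p : K) : Prop :=
  exists g : K -> R, continuous g /\
    forall U : set K, open U -> U p -> exists x y, U x /\ U y /\ g x <> g y.

(* Ball fixed point property of C(K,p): every nonexpansive self-map of the
   closed unit ball has a fixed point.  (T is given as a function on all of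
   K -> R; only its behaviour on the ball matters.) *)
Definition BFPP_CKp (R : realType) (K : topologicalType) (p : K) : Prop :=
  forall T : (K -> R) -> (K -> R),
    (forall f, @ball_CKp R K p f -> @ball_CKp R K p (T f)) ->
    (forall f g, @ball_CKp R K p f -> @ball_CKp R K p g ->
       supnorm (fun x => T f x - T g x) <= supnorm (fun x => f x - g x)) ->
    exists f, @ball_CKp R K p f /\ T f = f.

(* Main.v *)
Require Import Defs.
From mathcomp Require Import all_boot all_order all_algebra.
From mathcomp Require Import all_classical all_reals all_analysis.
From mathcomp Require Import ring lra.
Import Order.TTheory GRing.Theory Num.Theory.
Import numFieldNormedType.Exports.
Local Open Scope classical_set_scope.
Local Open Scope ring_scope.

Lemma le_supnorm (R : realType) (K : topologicalType) (u : K -> R) :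
  compact [set: K] -> continuous u -> forall x, `|u x| <= supnorm u.
Proof.
move=> cK cu x.
have cu' : {within [set: K], continuous (fun y => `|u y|)}.
  apply/continuous_subspaceT => y; apply: cvg_norm; exact: cu.
have [c _ hc] := compact_EVT_max (ex_intro _ x I) cK cu'.
apply: ub_le_sup; last by exists x.
by exists `|u c| => _ [y _ <-]; apply: hc; rewrite inE.
Qed.

Lemma min_lip (R : realType) (a b : R) :
  `|Num.min 1 a - Num.min 1 b| <= `|a - b|.
Proof.
have e1 : a - b <= `|a - b| := ler_norm _.
have e2 : b - a <= `|a - b| by rewrite distrC ler_norm.
rewrite ler_norml !minEle; case: ifP => Ha; case: ifP => Hb;
  rewrite ?(negbT Ha) ?(negbT Hb); try move/negbT: Ha; try move/negbT: Hb;
  rewrite -?ltNge => *; apply/andP; split; lra.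
Qed.

Lemma fix_contra (R : realType) (a t : R) :
  0 < t -> `|a| < 2^-1 -> a = Num.min 1 (a + t) -> False.
Proof.
move=> t0; rewrite ltr_norml => /andP[a1 a2]; rewrite minEle; case: ifP => _ E.
- have : a < 2^-1 by [].
  rewrite E; have : (2^-1 : R) < 1 by rewrite invf_lt1 // ltr1n.
  lra.
- lra.
Qed.

Theorem mainTheorem16 (R : realType) (K : topologicalType) (p : K) :
  hausdorff_space K -> compact [set: K] -> @non_P_point R K p -> ~ @BFPP_CKp R K p.
Proof.
move=> _ cK [g [cg ng]] bfpp.
pose h x := `|g x - g p|.
have ch : continuous h.
  move=> x; apply: cvg_norm; apply: cvgB; [exact: cg | exact: cvg_cst].
have h0 : forall x, 0 <= h x by move=> x; exact: normr_ge0.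
pose T (f : K -> R) := fun x => Num.min 1 (f x + h x).
have cT : forall f, continuous f -> continuous (T f).
  move=> f cf x; apply: (@continuous_min _ _ (fun=> 1) (fun x => f x + h x)).
    exact: cvg_cst.
  by apply: cvgD; [exact: cf | exact: ch].
have [f [[[cf fp] nf] Tf]] : exists f, @ball_CKp R K p f /\ T f = f.
  apply: bfpp.
  - move=> f [[cf fp] nf]; split; first split.
    + exact: cT.
    + by rewrite /T fp /h subrr normr0 addr0 minEle ler10.
    + apply: ge_sup; first by exists `|T f p|, p.
      move=> _ [x _ <-]; have := @le_supnorm _ _ _ cK cf x.
      move=> /le_trans/(_ nf); rewrite !ler_norml => /andP[f1 f2].
      rewrite /T le_min ge_min lexx orTb /= andbT.
      apply/andP; split; first lra.
      have := h0 x; lra.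
  - move=> f1 f2 [[cf1 _] _] [[cf2 _] _].
    apply: ge_sup; first by exists `|T f1 p - T f2 p|, p.
    move=> _ [x _ <-]; rewrite /T. eapply le_trans; first exact: min_lip.
    have -> : f1 x + h x - (f2 x + h x) = f1 x - f2 x by ring.
    apply: (@le_supnorm _ _ (fun x => f1 x - f2 x) cK).
    by move=> y; apply: cvgB; [exact: cf1 | exact: cf2].
have ep : (0:R) < 2^-1 by rewrite invr_gt0 ltr0n.
have H : \forall t \near p, `|f p - f t| < 2^-1.
  by apply: cvgr_dist_lt; [exact: cf | exact: ep].
have [U [oU Up] UV] : exists2 U : set K, open_nbhs p U & U `<=` (fun t => `|f p - f t| < 2^-1).
  by move: H; rewrite /prop_near1 /= nbhsE.
have [x [y [Ux [Uy gxy]]]] := ng U oU Up.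
have key : forall z, U z -> g z <> g p -> False.
  move=> z Uz gz; apply: (@fix_contra R (f z) (h z)).
  - by rewrite normr_gt0 subr_eq0; apply/eqP.
  - by have := UV z Uz; rewrite /= fp sub0r normrN.
  - by move: (congr1 (fun F => F z) Tf); rewrite /T /= => ->.
have [gx|gx] := eqVneq (g x) (g p).
  apply: (key y Uy) => gy; apply: gxy; by rewrite gx gy.
by apply: (key x Ux); apply/eqP.
Qed.
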